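(* Let $n\geq1$. If $\beta\in B_{2n}$ and the underlying permutation of $\beta$ consists of a single cycle (of length $2n$), then $\beta$ does not have positive Burau eigenvalues, i.e. it is not the case that all eigenvalues of $\rho(\beta)$ lie in $\mathbb{E}$ and are positive.
   Context: $B_N$ is the braid group generated by $\sigma_1,\dots,\sigma_{N-1}$, with underlying permutation homomorphism $B_N\to S_N$, $\sigma_i\mapsto(i\ i{+}1)$. The reduced Burau representation $\rho:B_N\to\mathrm{GL}_{N-1}(\mathbb{Z}[t^{\pm1}])$ is the homomorphism given for $N\ge3$ by $\rho(\sigma_1)=\begin{pmatrix}-t&0&0\\1&1&0\\0&0&I_{N-3}\end{pmatrix}$, $\rho(\sigma_{N-1})=\begin{pmatrix}I_{N-3}&0&0\\0&1&t\\0&0&-t\end{pmatrix}$, $\rho(\sigma_i)=\begin{pmatrix}I_{i-2}&0&0&0&0\\0&1&t&0&0\\0&0&-t&0&0\\0&0&1&1&0\\0&0&0&0&I_{N-i-2}\end{pmatrix}$ for $2\le i\le N-2$, and for $N=2$ by $\rho(\sigma_1)=(-t)$. $\mathbb{E}=\bigcup_{k\ge1}\mathbb{R}((t^{1/k}))$ is the field of Puiseux series over $\mathbb{R}$, with the ordering whose positive elements are the nonzero series whose lowest-exponent nonzero coefficient is positive. *)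

(* Defs.v *)
From HB Require Import structures.
From mathcomp Require Import all_boot all_order all_algebra all_fingroup.
From mathcomp Require Import boolp reals zify.
Set Implicit Arguments. Unset Strict Implicit. Unset Printing Implicit Defensive.
Import Order.TTheory GRing.Theory Num.Theory.
Local Open Scope ring_scope.

Section PowerSeries.
Variable R : idomainType.

(* Formal power series R[[u]] over an integral domain R, represented by their
   coefficient sequences; equality is (classical) extensional equality. *)
Variant pseries := PSeries of nat -> R.
Definition pcoef (f : pseries) : nat -> R := let: PSeries c := f in c.

HB.instance Definition _ := gen_eqMixin pseries.
HB.instance Definition _ := gen_choiceMixin pseries.

Lemma pseriesP (f g : pseries) : (forall n, pcoef f n = pcoef g n) -> f = g.
Proof. by case: f; case: g => a b /= H; congr PSeries; apply/funext. Qed.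

Definition ps_zero := PSeries (fun _ => 0).
Definition ps_opp f := PSeries (fun n => - pcoef f n).
Definition ps_add f g := PSeries (fun n => pcoef f n + pcoef g n).

Lemma ps_addA : associative ps_add.
Proof. by move=> f g h; apply: pseriesP => n /=; rewrite addrA. Qed.
Lemma ps_addC : commutative ps_add.
Proof. by move=> f g; apply: pseriesP => n /=; rewrite addrC. Qed.
Lemma ps_add0 : left_id ps_zero ps_add.
Proof. by move=> f; apply: pseriesP => n /=; rewrite add0r. Qed.
Lemma ps_addN : left_inverse ps_zero ps_opp ps_add.
Proof. by move=> f; apply: pseriesP => n /=; rewrite addNr. Qed.

HB.instance Definition _ := GRing.isZmodule.Build pseries ps_addA ps_addC ps_add0 ps_addN.

Definition ps_trunc n f : {poly R} := \poly_(i < n.+1) pcoef f i.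

Definition ps_one := PSeries (fun n => (n == 0%N)%:R).
Definition ps_mul f g := PSeries (fun n => (ps_trunc n f * ps_trunc n g)`_n).

Lemma ps_mulE f g n :
  pcoef (ps_mul f g) n = \sum_(i < n.+1) pcoef f i * pcoef g (n - i).
Proof.
rewrite /= coefM; apply: eq_bigr => i _.
by rewrite !coef_poly ltn_ord ltnS leq_subr.
Qed.

Lemma coef_mul_agree (p q : {poly R}) f g n m :
  (forall i, (i <= n)%N -> p`_i = pcoef f i) ->
  (forall i, (i <= n)%N -> q`_i = pcoef g i) ->
  (m <= n)%N -> (p * q)`_m = pcoef (ps_mul f g) m.
Proof.
move=> Hp Hq Hm; rewrite ps_mulE coefM; apply: eq_bigr => i _.
have Hi : (i <= n)%N by apply: leq_trans Hm; rewrite -ltnS.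
by rewrite Hp // Hq // (leq_trans (leq_subr _ _) Hm).
Qed.

Lemma ps_trunc_coef n f i : (i <= n)%N -> (ps_trunc n f)`_i = pcoef f i.
Proof. by move=> Hi; rewrite coef_poly ltnS Hi. Qed.

Lemma ps_mulA : associative ps_mul.
Proof.
move=> f g h; apply: pseriesP => n.
have E1 : pcoef (ps_mul (ps_mul f g) h) n =
          ((ps_trunc n f * ps_trunc n g) * ps_trunc n h)`_n.
  symmetry; apply: (@coef_mul_agree _ _ (ps_mul f g) h n n) => //.
  - move=> i Hi; apply: (coef_mul_agree (n:=n)) => //;
      by move=> j Hj; apply: ps_trunc_coef.
  - by move=> i Hi; apply: ps_trunc_coef.
have E2 : pcoef (ps_mul f (ps_mul g h)) n =
          (ps_trunc n f * (ps_trunc n g * ps_trunc n h))`_n.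
  symmetry; apply: (@coef_mul_agree _ _ f (ps_mul g h) n n) => //.
  - by move=> i Hi; apply: ps_trunc_coef.
  - move=> i Hi; apply: (coef_mul_agree (n:=n)) => //;
      by move=> j Hj; apply: ps_trunc_coef.
by rewrite E1 E2 mulrA.
Qed.

Lemma ps_mulC : commutative ps_mul.
Proof. by move=> f g; apply: pseriesP => n /=; rewrite mulrC. Qed.

Lemma ps_mul1 : left_id ps_one ps_mul.
Proof.
move=> f; apply: pseriesP => n; rewrite ps_mulE big_ord_recl /= mul1r subn0.
by rewrite big1 ?addr0 // => i _; rewrite mul0r.
Qed.

Lemma ps_mulDl : left_distributive ps_mul ps_add.
Proof.
move=> f g h; apply: pseriesP => n.
change (pcoef (ps_mul (ps_add f g) h) n = pcoef (ps_mul f h) n + pcoef (ps_mul g h) n).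
rewrite !ps_mulE -big_split /=.
by apply: eq_bigr => i _; rewrite mulrDl.
Qed.

Lemma ps_one_neq0 : ps_one != ps_zero.
Proof.
apply/eqP => /(congr1 (fun f => pcoef f 0)) /= /eqP.
by rewrite oner_eq0.
Qed.

HB.instance Definition _ :=
  GRing.Zmodule_isComNzRing.Build pseries ps_mulA ps_mulC ps_mul1 ps_mulDl ps_one_neq0.

Definition ps_unit : {pred pseries} := fun x => `[< exists y, y * x = 1 >].
Definition ps_inv (x : pseries) : pseries :=
  match pselect (exists y, y * x = 1) with
  | left H => projT1 (cid H)
  | right _ => x
  end.

Lemma ps_mulVx : {in ps_unit, left_inverse 1 ps_inv *%R}.
Proof.
move=> x Hx; have {Hx} Hx : exists y, y * x = 1 by apply/asboolP.
rewrite /ps_inv.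
case: pselect => [H|//]; by case: cid.
Qed.
Lemma ps_unitPl : forall x y : pseries, y * x = 1 -> ps_unit x.
Proof. by move=> x y H; apply/asboolP; exists y. Qed.
Lemma ps_invr_out : {in [predC ps_unit], ps_inv =1 id}.
Proof.
move=> x Hx; have {Hx} Hn : ~ exists y, y * x = 1.
  by move=> H; move/negP: Hx; apply; apply/asboolP.
rewrite /ps_inv.
by case: pselect.
Qed.

HB.instance Definition _ :=
  GRing.ComNzRing_hasMulInverse.Build pseries ps_mulVx ps_unitPl ps_invr_out.

Lemma ps_coef_eq0 (f : pseries) : (forall n, pcoef f n = 0) -> f = 0.
Proof. by move=> H; apply: pseriesP => n; rewrite H. Qed.

Lemma ps_integral : GRing.integral_domain_axiom pseries.
Proof.
move=> f g fg0.
case: (pselect (exists n, pcoef f n != 0)) => [Hf|Hf]; last first.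
  apply/orP; left; apply/eqP; apply: ps_coef_eq0 => n.
  by apply/eqP/negPn/negP => H; apply: Hf; exists n.
case: (pselect (exists n, pcoef g n != 0)) => [Hg|Hg]; last first.
  apply/orP; right; apply/eqP; apply: ps_coef_eq0 => n.
  by apply/eqP/negPn/negP => H; apply: Hg; exists n.
exfalso.
have [i [fi fmin]] : exists i, pcoef f i != 0 /\ forall a, (a < i)%N -> pcoef f a = 0.
  case: (ex_minnP Hf) => m Hm Hmin; exists m; split => // a Ha.
  by apply/eqP/negPn/negP => /Hmin; rewrite leqNgt Ha.
have [j [gj gmin]] : exists j, pcoef g j != 0 /\ forall a, (a < j)%N -> pcoef g a = 0.
  case: (ex_minnP Hg) => m Hm Hmin; exists m; split => // a Ha.
  by apply/eqP/negPn/negP => /Hmin; rewrite leqNgt Ha.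
have := congr1 (fun h => pcoef h (i + j)) fg0.
change (pcoef (ps_mul f g) (i + j) = 0 -> False).
have Hi : (i < (i + j).+1)%N by rewrite ltnS leq_addr.
rewrite ps_mulE (bigD1 (Ordinal Hi)) //= big1 ?addr0.
  by rewrite addKn => /eqP; rewrite mulf_eq0 (negPf fi) (negPf gj).
move=> k /eqP Hk; case: (ltngtP k i) => Hki.
- by rewrite fmin // mul0r.
- rewrite gmin ?mulr0 //; move: (ltn_ord k) Hki.
  by case: k {Hk} => k /= _; lia.
- by exfalso; apply: Hk; apply: val_inj.
Qed.

HB.instance Definition _ := GRing.ComUnitRing_isIntegral.Build pseries ps_integral.

End PowerSeries.

Definition ps_X (R : idomainType) : pseries R := PSeries (fun n => (n == 1%N)%:R).

(* The field of formal Laurent series R((u)), realized as the field of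
   fractions of the power series ring R[[u]]. *)
Notation laurent R := {fraction pseries R}.

(* The ordering of R((u)): a Laurent series is positive iff it is nonzero and
   its lowest-exponent nonzero coefficient is positive.  For x = p/q with p, q
   power series whose lowest nonzero coefficients are p_i and q_j, the lowest
   nonzero coefficient of x is p_i / q_j, whose sign is that of p_i * q_j. *)
Definition laurent_pos (R : realDomainType) (x : laurent R) : Prop :=
  exists (p q : pseries R) (i j : nat),
    x = FracField.tofrac p / FracField.tofrac q /\
    (forall a, (a < i)%N -> pcoef p a = 0) /\
    (forall b, (b < j)%N -> pcoef q b = 0) /\
    0 < pcoef p i * pcoef q j.

(* A braid word: a list of letters (i, true) = sigma_i, (i, false) = sigma_i^-1.
   Every element of B_N is represented by such a word. *)
Definition braid_word (N : nat) (w : seq (nat * bool)) : bool :=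
  all (fun a => (0 < a.1 < N)%N) w.

(* Reduced Burau matrix of sigma_i in B_N (size N-1), with t in a commutative
   ring F. Using 1-based indices r, c in [1, N-1] it is the identity except in
   column i, where the entries are  t (row i-1),  -t (row i),  1 (row i+1)
   (rows outside [1, N-1] being absent).  This matches the block matrices of
   the paper for sigma_1, sigma_(N-1), sigma_i (2 <= i <= N-2), and N = 2.
   Below j, k are the 0-based row/column indices (r = j+1, c = k+1). *)
Definition burau_gen (F : comUnitRingType) (t : F) (N i : nat) : 'M[F]_(N.-1) :=
  \matrix_(j, k)
    if (k.+1 == i)%N then
      (if (j.+2 == i)%N then t
       else if (j.+1 == i)%N then - t
       else if (nat_of_ord j == i)%N then 1 else 0)
    else (j == k)%:R.

Definition burau_letter (F : comUnitRingType) (t : F) (N : nat) (a : nat * bool)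
  : 'M[F]_(N.-1) :=
  if a.2 then burau_gen t N a.1 else invmx (burau_gen t N a.1).

Definition burau (F : comUnitRingType) (t : F) (N : nat) (w : seq (nat * bool))
  : 'M[F]_(N.-1) :=
  foldr (fun a M => burau_letter t N a *m M) 1%:M w.

(* underlying permutation: sigma_i |-> transposition (i i+1) of {1..N},
   i.e. of the 0-based points i-1 and i of 'I_N. *)
Definition letter_perm (N : nat) (a : nat * bool) : 'S_N :=
  match insub a.1.-1, insub a.1 with
  | Some x, Some y => tperm x y
  | _, _ => 1%g
  end.

Definition braid_perm (N : nat) (w : seq (nat * bool)) : 'S_N :=
  foldr (fun a s => (letter_perm N a * s)%g) 1%g w.

(* beta has positive Burau eigenvalues: all eigenvalues of rho(beta) lie in
   E = U_k R((t^(1/k))) and are positive.  R((t^(1/k))) is identified with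
   R((u)) via t = u^k; since the eigenvalues are finitely many and the
   R((t^(1/k))) form a directed union, they all lie in E iff they all lie in
   a single R((t^(1/k))).  "All eigenvalues lie in the field" means the
   characteristic polynomial splits into linear factors over it. *)
Definition positive_Burau_eigenvalues (R : realType) (N : nat)
  (w : seq (nat * bool)) : Prop :=
  exists k : nat, (0 < k)%N /\
    exists s : seq (laurent R),
      char_poly (burau (FracField.tofrac (ps_X R) ^+ k) N w) = \prod_(x <- s) ('X - x%:P) /\
      (forall x, x \in s -> laurent_pos x).

(* Main.v *)
Require Import Defs.
From HB Require Import structures.
From mathcomp Require Import all_boot all_order all_algebra all_fingroup.
From mathcomp Require Import boolp reals.
From mathcomp Require Import zify ring lra.
Import Order.TTheory GRing.Theory Num.Theory.
Local Open Scope ring_scope.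

Lemma low_mul {R : idomainType} {f g : pseries R} {i j : nat} :
  (forall a, (a < i)%N -> pcoef f a = 0) -> (forall b, (b < j)%N -> pcoef g b = 0) ->
  (forall c, (c < i + j)%N -> pcoef (f * g) c = 0) /\
  pcoef (f * g) (i + j) = pcoef f i * pcoef g j.
Proof.
move=> Hf Hg; split.
  move=> c Hc; change (pcoef (ps_mul f g) c = 0); rewrite ps_mulE.
  apply: big1 => k _; case: (ltnP k i) => Hk; first by rewrite Hf // mul0r.
  by rewrite Hg ?mulr0 //; have := ltn_ord k; lia.
change (pcoef (ps_mul f g) (i + j) = pcoef f i * pcoef g j); rewrite ps_mulE.
have Hi : (i < (i + j).+1)%N by lia.
rewrite (bigD1 (Ordinal Hi)) //= big1 ?addr0; first by rewrite addKn.
move=> k /eqP Hk; case: (ltnP k i) => Hki; first by rewrite Hf // mul0r.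
have Hki' : (i < k)%N.
  rewrite ltn_neqAle Hki andbT; apply/eqP => E; apply: Hk; apply: val_inj => /=; lia.
by rewrite Hg ?mulr0 //; have := ltn_ord k; lia.
Qed.

Section Pos.
Variable R : realType.
Notation tf := (@FracField.tofrac (pseries R)).

Lemma pos_mul (x y : laurent R) : laurent_pos x -> laurent_pos y -> laurent_pos (x * y).
Proof.
move=> [p [q [i [j [-> [Hp [Hq H]]]]]]] [p' [q' [i' [j' [-> [Hp' [Hq' H']]]]]]].
exists (p * p'), (q * q'), (i + i')%N, (j + j')%N.
have [A1 A2] := low_mul Hp Hp'; have [B1 B2] := low_mul Hq Hq'.
split; first by rewrite mulf_div !tofracM.
split => //; split => //; rewrite A2 B2.
have := mulr_gt0 H H'; congr (0 < _); ring.
Qed.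

Lemma pos_inv (x : laurent R) : laurent_pos x -> laurent_pos x^-1.
Proof.
move=> [p [q [i [j [-> [Hp [Hq H]]]]]]].
exists q, p, j, i; split; first by rewrite invf_div.
by split => //; split => //; rewrite mulrC.
Qed.

Lemma pos_1 : laurent_pos (1 : laurent R).
Proof.
exists 1, 1, 0%N, 0%N; split; first by rewrite tofrac1 divr1.
by split => //; split => //; rewrite /= mulr1 ltr01.
Qed.

Lemma pos_u : laurent_pos (tf (ps_X R)).
Proof.
exists (ps_X R), 1, 1%N, 0%N; split; first by rewrite tofrac1 divr1.
split; first by case => //.
by split => //; rewrite /= mulr1 ltr01.
Qed.

Lemma pos_exp (x : laurent R) k : laurent_pos x -> laurent_pos (x ^+ k).
Proof.
move=> Hx; elim: k => [|k IH]; first by rewrite expr0; exact: pos_1.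
by rewrite exprS; apply: pos_mul.
Qed.

Lemma nz_of_pos {p q : pseries R} {i j : nat} : 0 < pcoef p i * pcoef q j ->
  pcoef p i != 0 /\ pcoef q j != 0.
Proof.
move=> H; split; apply/eqP => E; move: H; rewrite E ?mul0r ?mulr0 ltxx //.
Qed.

Lemma pos_opp (x : laurent R) : laurent_pos x -> laurent_pos (- x) -> False.
Proof.
move=> [p [q [i [j [Ex [Hp [Hq H]]]]]]] [p' [q' [i' [j' [Ex' [Hp' [Hq' H']]]]]]].
have [pi0 qj0] := nz_of_pos H; have [pi0' qj0'] := nz_of_pos H'.
have q0 : tf q != 0.
  rewrite tofrac_eq0; apply/eqP => E; move: qj0; rewrite E /= eqxx //.
have q0' : tf q' != 0.
  rewrite tofrac_eq0; apply/eqP => E; move: qj0'; rewrite E /= eqxx //.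
have E : p * q' = - (p' * q).
  apply/eqP; rewrite -tofrac_eq tofracN !tofracM.
  have -> : tf p = x * tf q by rewrite Ex divfK.
  have -> : tf p' = - x * tf q' by rewrite Ex' divfK.
  by apply/eqP; ring.
have [A1 A2] := low_mul Hp Hq'; have [B1 B2] := low_mul Hp' Hq.
have C : forall c, pcoef (p * q') c = - pcoef (p' * q) c by move=> c; rewrite E.
case: (ltngtP (i + j') (i' + j)) => Hc.
- move: (C (i + j')%N); rewrite A2 B1 // oppr0 => /eqP; rewrite mulf_eq0 (negPf pi0) (negPf qj0') //.
- move: (C (i' + j)%N); rewrite A1 // B2 => /esym /eqP; rewrite oppr_eq0 mulf_eq0 (negPf pi0') (negPf qj0) //.
- move: (C (i + j')%N); rewrite A2 Hc B2 => Heq.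
  have : 0 < (pcoef p i * pcoef q j) * (pcoef p' i' * pcoef q' j') by apply: mulr_gt0.
  have -> : (pcoef p i * pcoef q j) * (pcoef p' i' * pcoef q' j')
     = (pcoef p i * pcoef q' j') * (pcoef p' i' * pcoef q j) by ring.
  rewrite Heq mulNr oppr_gt0 ltNge => /negP; apply; exact: sqr_ge0.
Qed.
End Pos.
Lemma det_gen (F : comUnitRingType) (t : F) (N i : nat) :
  (0 < i < N)%N -> \det (burau_gen t N i) = - t.
Proof.
move=> /andP [i0 iN].
have ci : (i.-1 < N.-1)%N by lia.
pose c := Ordinal ci.
have hc : nat_of_ord c = i.-1 by [].
have e1 : (i.-1.+1 == i) = true by apply/eqP; lia.
have e2 : (i.-1.+2 == i) = false by apply/negbTE/eqP; lia.
rewrite (expand_det_col _ c) (bigD1 c) //= big1 ?addr0.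
  have -> : burau_gen t N i c c = - t by rewrite mxE /= e1 e2.
  rewrite /cofactor.
  have -> : row' c (col' c (burau_gen t N i)) = 1%:M.
    apply/matrixP => a b; rewrite !mxE.
    have -> : ((lift c b).+1 == i) = false.
      move: (neq_lift c b); rewrite -(inj_eq val_inj) => /eqP h.
      apply/negbTE/eqP => E; apply: h; change (nat_of_ord c = nat_of_ord (lift c b)); lia.
    by rewrite (inj_eq (@lift_inj _ c)).
  by rewrite det1 mulr1 -signr_odd oddD addbb expr0 mulr1.
move=> r Hr; rewrite /cofactor.
case: (unliftP c r) => [j' Ej|Ec]; last by move: Hr; rewrite Ec eqxx.
rewrite (expand_det_col _ j') big1 ?mulr0 ?mul0r // => a _.
rewrite !mxE -Ej.
have -> : (r.+1 == i) = false.
  apply/negbTE/eqP => E; move/eqP: Hr; apply; apply: val_inj; rewrite /=; lia.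
by rewrite eq_sym (negPf (neq_lift r a)) mul0r.
Qed.
Lemma odd_braid (N : nat) (w : seq (nat * bool)) :
  braid_word N w -> odd_perm (braid_perm N w) = odd (size w).
Proof.
elim: w => [|a w IH]; first by rewrite odd_perm1.
move=> /= /andP [/andP [a0 aN] Hw].
rewrite /letter_perm; case: insubP => [x _ ex|/negP]; last by lia.
case: insubP => [y _ ey|/negP]; last by lia.
rewrite odd_mul_tperm IH //.
have -> : (x != y) = true.
  apply/negP => /eqP E; move: ex; rewrite E ey; lia.
by [].
Qed.
Lemma det_burau {R : realType} {t : laurent R} {N w} :
  laurent_pos t -> braid_word N w ->
  exists y, laurent_pos y /\ \det (burau t N w) = (-1) ^+ (size w) * y.
Proof.
move=> Ht; elim: w => [|a w IH].
  by move=> _; exists 1; split; [exact: pos_1| rewrite /= det1 expr0 mulr1].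
move=> /= /andP [Ha Hw]; have [y [Hy Ey]] := IH Hw.
rewrite det_mulmx Ey /burau_letter.
case: a.2.
  exists (t * y); split; first exact: pos_mul.
  rewrite det_gen // exprS; ring.
exists (t^-1 * y); split; first by apply: pos_mul => //; apply: pos_inv.
rewrite det_inv det_gen // invrN exprS; ring.
Qed.

Lemma prod_opp (F : comNzRingType) (s : seq F) :
  \prod_(x <- s) (0 - x) = (-1) ^+ size s * \prod_(x <- s) x.
Proof.
elim: s => [|x s IH]; first by rewrite !big_nil expr0 mulr1.
by rewrite !big_cons IH /= exprS; ring.
Qed.

Theorem mainTheorem14 (R : realType) (n : nat) (w : seq (nat * bool)) :
  (1 <= n)%N ->
  braid_word (2 * n) w ->
  #|porbits (braid_perm (2 * n) w)| = 1%N ->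
  ~ positive_Burau_eigenvalues R (2 * n) w.
Proof.
move=> n1 Hw Hc [k [k0 [s [Ech Hs]]]].
set t := FracField.tofrac (ps_X R) ^+ k in Ech.
have Ht : laurent_pos t by apply: pos_exp; apply: pos_u.
have [y [Hy Ey]] := det_burau Ht Hw.
have Hodd : odd (size w).
  by rewrite -(@odd_braid _ _ Hw) /odd_perm Hc card_ord oddM.
rewrite -signr_odd Hodd expr1 mulN1r in Ey.
set A := burau t (2 * n) w in Ech Ey.
have Hsz : size s = (2 * n).-1.
  have := size_char_poly A; rewrite Ech size_prod_XsubC; by case.
have := char_poly_det A; rewrite Ech -horner_coef0 horner_prod.
under eq_bigr do rewrite hornerXsubC.
rewrite prod_opp Hsz => /(congr1 (fun z => (-1) ^+ (2 * n).-1 * z)).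
rewrite !signrMK => Edet.
have Hp : laurent_pos (\prod_(x <- s) x).
  elim: s Hs {Ech Hsz Edet} => [|x s IH] Hs; first by rewrite big_nil; exact: pos_1.
  rewrite big_cons; apply: pos_mul; first by apply: Hs; rewrite inE eqxx.
  by apply: IH => z Hz; apply: Hs; rewrite inE Hz orbT.
apply: (@pos_opp _ y Hy); rewrite -Ey -Edet; exact: Hp.
Qed.
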